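(* Let $G=(V,E)$ be a connected graph with $n$ vertices, $\tau$ a set of types with $|\tau|=k>1$, $f:\tau\to\mathbb{Q}_{\ge1}$ a fitness function, and $\alpha\in\tau^+(f)$. Let $f^*=\max\{f(j): j\in\tau\setminus\{\alpha\}\}$ and suppose $f^*<f(\alpha)=f^+$. Let $M$ be a Moran process $M(G,\tau,f,M_0)$ and suppose that $V_\alpha(t)\notin\{\emptyset,V\}$ for a non-negative integer $t$. Then (conditional on $M_t$) $\mathbb{E}(\Psi_\alpha(M_{t+1})-\Psi_\alpha(M_t))>(1-f^*/f^+)/n^3$.
   Context: $f^+=\max_{i\in\tau}f(i)$, $\tau^+(f)=\{i:f(i)=f^+\}$. For $G=(V,E)$, $N(v)$ is the neighbourhood and $d(v)=|N(v)|$. For a state $S:V\to\tau$, $S|_{v\to w}$ equals $S$ except $w$ gets type $S(v)$. The Moran process $M(G,\tau,f,M_0)$: Markov chain on states from $M_0$; given $M_t$, choose $v$ with probability $f(M_t(v))/\sum_uf(M_t(u))$, then $w\in N(v)$ uniformly, and set $M_{t+1}=M_t|_{v\to w}$. $V_j(t)=\{v: M_t(v)=j\}$. The potential $\Psi_j(S)=\sum_{v:S(v)=j}1/d(v)$. *)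

(* Defs.v *)
From mathcomp Require Import all_boot all_order all_algebra.
Set Implicit Arguments. Unset Strict Implicit. Unset Printing Implicit Defensive.
Import Order.TTheory GRing.Theory Num.Theory.
Local Open Scope ring_scope.

Section Moran.
Variables (V tau : finType) (e : rel V).

Definition nbhd (v : V) : {set V} := [set w | e v w].
Definition deg (v : V) : nat := #|nbhd v|.

Definition simple_graph := symmetric e /\ irreflexive e.
Definition connected_graph := forall x y : V, connect e x y.

(* f^+ and f^* (maximum of f over tau \ {alpha}); fitness values are >= 1 so 0 is a safe seed *)
Definition fplus (f : tau -> rat) : rat := \big[Num.max/0]_(i : tau) f i.
Definition fstar (f : tau -> rat) (a : tau) : rat := \big[Num.max/0]_(j : tau | j != a) f j.
Definition tauplus (f : tau -> rat) : {set tau} := [set i | f i == fplus f].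

Definition upd (S : {ffun V -> tau}) (v w : V) : {ffun V -> tau} :=
  [ffun u => if u == w then S v else S u].

Definition Psi (j : tau) (S : {ffun V -> tau}) : rat :=
  \sum_(v : V | S v == j) ((deg v)%:R)^-1.

Definition Vset (j : tau) (S : {ffun V -> tau}) : {set V} := [set v | S v == j].

Definition total_fitness (f : tau -> rat) (S : {ffun V -> tau}) : rat := \sum_(u : V) f (S u).

(* Expected one-step change of Psi_j of the Moran process given M_t = S:
   v chosen with probability f(S v)/sum_u f(S u), then w uniformly in N(v). *)
Definition expected_Psi_change (f : tau -> rat) (j : tau) (S : {ffun V -> tau}) : rat :=
  \sum_(v : V) \sum_(w in nbhd v)
     (f (S v) / total_fitness f S) * ((deg v)%:R)^-1 * (Psi j (upd S v w) - Psi j S).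

End Moran.

(* Main.v *)
Require Import Defs.
From mathcomp Require Import all_boot all_order all_algebra.
From mathcomp Require Import ring lra zify.
Import Order.TTheory GRing.Theory Num.Theory.
Local Open Scope ring_scope.

Lemma dPsi (V tau : finType) (e : rel V) (a : tau) (S : {ffun V -> tau}) (v w : V) :
  Psi e a (upd S v w) - Psi e a S =
  if S v == a then (if S w == a then 0 else ((deg e w)%:R)^-1)
  else (if S w == a then - ((deg e w)%:R)^-1 else 0).
Proof.
rewrite /Psi !(big_mkcond (fun u => _ == a)) /=.
rewrite (bigD1 w) //= [X in _ - X](bigD1 w) //=.
have -> : \sum_(i | i != w) (if upd S v w i == a then ((deg e i)%:R)^-1 else 0)
   = \sum_(i | i != w) (if S i == a then ((deg e i)%:R)^-1 else 0 : rat).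
  apply: eq_bigr => u /negbTE uw; by rewrite /upd ffunE uw.
rewrite /upd ffunE eqxx.
by case: (S v == a); case: (S w == a); rewrite /=; ring.
Qed.

Lemma boundary_edge (V tau : finType) (e : rel V) (a : tau) (S : {ffun V -> tau}) :
  forall p x, path e x p -> S x = a -> S (last x p) != a ->
  exists v w, [&& e v w, S v == a & S w != a].
Proof.
elim=> [|y p IH] x /=; first by move=> _ -> /eqP.
case/andP=> exy pth Sx Sl.
case: (eqVneq (S y) a) => Sy.
  exact: (IH y pth Sy Sl).
by exists x, y; rewrite exy Sx eqxx Sy.
Qed.

Theorem lemma12 (V tau : finType) (e : rel V) (f : tau -> rat) (alpha : tau)
    (S : {ffun V -> tau}) :
  simple_graph e -> connected_graph e ->
  (1 < #|tau|)%N ->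
  (forall i : tau, 1 <= f i) ->
  alpha \in tauplus f ->
  fstar f alpha < f alpha ->
  Vset alpha S != set0 -> Vset alpha S != [set: V] ->
  expected_Psi_change e f alpha S > (1 - fstar f alpha / fplus f) / (#|V|%:R ^+ 3).
Proof.
move=> [esym eirr] conn _ f1 aplus fsa Sne SnT.
have fpa : fplus f = f alpha by move: aplus; rewrite inE => /eqP.
have fle : forall j, j != alpha -> f j <= fstar f alpha.
  move=> j ja; rewrite /fstar. exact: (@le_bigmax_cond _ _ _ 0 _ (fun i => i != alpha) f ja).
have fleA : forall j, f j <= f alpha.
  by move=> j; rewrite -fpa /fplus; exact: le_bigmax.
have fs0 : 0 <= fstar f alpha.
  rewrite /fstar; elim/big_ind: _ => //= [x y hx hy|x _]; [by rewrite le_max hx | exact: le_trans (f1 x)].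
have fa0 : 0 < f alpha by apply: lt_le_trans (f1 alpha).
set n := #|V|.
set F := total_fitness f S.
have [v0 [w0 /and3P [e0 Sv0 Sw0]]] : exists v w, [&& e v w, S v == alpha & S w != alpha].
  case/set0Pn: Sne => x; rewrite inE => /eqP Sx.
  have [y Sy] : exists y, S y != alpha.
    apply/existsP; apply: contraR SnT; rewrite negb_exists => /forallP H.
    apply/eqP/setP => y; rewrite !inE; move: (H y); by rewrite negbK.
  case/connectP: (conn x y) => p pth ly.
  apply: (@boundary_edge _ _ e alpha S p x pth Sx); by rewrite -ly.
have n0 : (0 < n)%N by rewrite /n; apply/card_gt0P; exists v0.
have Fpos : 0 < F.
  rewrite /F /total_fitness (bigD1 v0) //=.
  have : 0 <= \sum_(i | i != v0) f (S i) by apply: sumr_ge0 => i _; exact: le_trans (f1 _).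
  have := f1 (S v0). lra.
have FleN : F <= n%:R * f alpha.
  rewrite /F /total_fitness; apply: le_trans (ler_sum _ (fun u _ => fleA (S u))) _.
  by rewrite sumr_const /n mulr_natl.
have dlt : forall v, (deg e v < n)%N.
  move=> v; rewrite /deg /n -cardsT; apply: proper_card; apply/properP; split.
    by apply/subsetP => ?; rewrite inE.
  by exists v; rewrite ?inE ?eirr.
have dpos : forall v w, e v w -> (0 < deg e v)%N.
  by move=> v w evw; apply/card_gt0P; exists w; rewrite inE.
pose dd v := ((deg e v)%:R : rat).
pose P v w := if [&& e v w, S v == alpha & S w != alpha] then f alpha / (F * dd v * dd w) else 0.
pose Q v w := if [&& e v w, S v != alpha & S w == alpha] then f (S v) / (F * dd v * dd w) else 0.
pose Q' v w := if [&& e v w, S v == alpha & S w != alpha] then f (S w) / (F * dd v * dd w) else 0.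
pose C v w := if [&& e v w, S v == alpha & S w != alpha] then (f alpha - f (S w)) / (F * dd v * dd w) else 0.
have stepA : expected_Psi_change e f alpha S = \sum_v \sum_w P v w - \sum_v \sum_w Q v w.
  rewrite -sumrB /expected_Psi_change; apply: eq_bigr => v _.
  rewrite -sumrB big_mkcond; apply: eq_bigr => w _.
  rewrite inE dPsi /P /Q /dd.
  case: (e v w); case Sv: (S v == alpha); case Sw: (S w == alpha) => /=;
    rewrite ?(eqP Sv) ?invfM; ring.
have stepB : \sum_v \sum_w Q v w = \sum_v \sum_w Q' v w.
  rewrite exchange_big; apply: eq_bigr => v _; apply: eq_bigr => w _.
  rewrite /Q /Q' (esym w v).
  case: (e v w); case: (S v == alpha); case: (S w == alpha) => //=.
  by rewrite -!mulrA [dd w * dd v]mulrC.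
have stepC : expected_Psi_change e f alpha S = \sum_v \sum_w C v w.
  rewrite stepA stepB -sumrB; apply: eq_bigr => v _.
  rewrite -sumrB; apply: eq_bigr => w _.
  rewrite /P /Q' /C; case: ifP => _; last by rewrite subr0.
  by rewrite mulrBl.
have Cge0 : forall v w, 0 <= C v w.
  move=> v w; rewrite /C; case: ifP => // /and3P [evw Sv Sw].
  apply: divr_ge0; first by rewrite subr_ge0.
  by rewrite !mulr_ge0 // ltW.
have Cbig : C v0 w0 <= \sum_v \sum_w C v w.
  rewrite (bigD1 v0) //= (bigD1 w0) //= -addrA lerDl.
  by rewrite addr_ge0 // sumr_ge0 // => *; rewrite sumr_ge0.
rewrite stepC; apply: lt_le_trans Cbig.
rewrite /C e0 Sv0 Sw0 /= fpa.
set a := f alpha; set s := fstar f alpha; set N := (n%:R : rat).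
have Npos : 0 < N by rewrite ltr0n.
have ew0 : e w0 v0 by rewrite esym.
have hdn : (deg e v0 * deg e w0 < n ^ 2)%N.
  have := dlt v0; have := dlt w0; nia.
have hdd : dd v0 * dd w0 < N ^+ 2 by rewrite /dd /N -natrM -natrX ltr_nat.
have hdd0 : 0 < dd v0 * dd w0 by rewrite mulr_gt0 // ltr0n; [exact: dpos e0|exact: dpos ew0].
have xpos : 0 < F * dd v0 * dd w0 by rewrite -mulrA mulr_gt0.
have xlt : F * dd v0 * dd w0 < a * N ^+ 3.
  rewrite -mulrA; apply: le_lt_trans (_ : (N * a) * (dd v0 * dd w0) < _).
    by rewrite ler_wpM2r // ltW.
  have -> : a * N ^+ 3 = (N * a) * N ^+ 2 by rewrite !exprS expr0; ring.
  by rewrite ltr_pM2l // mulr_gt0.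
have e1 : (1 - s / a) / N ^+ 3 = (a - s) * (a * N ^+ 3)^-1.
  by field; rewrite ?expf_neq0 ?gt_eqF.
rewrite e1; apply: lt_le_trans (_ : (a - s) * (F * dd v0 * dd w0)^-1 <= _).
  rewrite ltr_pM2l ?subr_gt0 // ltf_pV2 // ?posrE //.
  by rewrite mulr_gt0 // exprn_gt0.
apply: ler_wpM2r; first by rewrite invr_ge0 ltW.
by rewrite lerD2l lerN2 fle.
Qed.
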